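(* Fix integers $k\ge 2$ and $1 \le t \le k/2$. Let $X$ be a set of $n$ elements with a fixed but unknown total order, and consider a $(k,t)$ scale, which on input any $k$-element subset of $X$ returns the $t$-th smallest element of that subset. Let $S$ be the set of the $t-1$ smallest elements of $X$ and $L$ the set of the $k-t$ largest elements of $X$. Then there is an off-line (non-adaptive) family of $O(n^{k-t+1})$ queries (for fixed $k,t$, as $n\to\infty$) from whose results the relative order of the elements of $X\setminus(S\cup L)$ can be determined, for every possible ordering of $X$. Together with the matching lower bound, this order $n^{k-t+1}$ is best possible.
   Context: A query is a $k$-element subset of $X$; the scale returns its $t$-th smallest element. In the off-line setting the whole family of queries must be specified in advance (without knowledge of any results), and all results are then revealed simultaneously. *)

(* Defs.v *)
From mathcomp Require Import all_boot all_order all_fingroup.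
Set Implicit Arguments. Unset Strict Implicit. Unset Printing Implicit Defensive.

(* Ground set X = 'I_n.  A total order on X is encoded by a permutation
   sigma : {perm 'I_n}; sigma x is the (0-based) rank of x, so x is smaller
   than y iff sigma x < sigma y. *)

Definition scale_answer (t n : nat) (sigma : {perm 'I_n}) (Q : {set 'I_n})
  (x : 'I_n) : bool :=
  (x \in Q) && (#|[set y in Q | sigma y < sigma x]| == t.-1).

(* x lies in X \ (S u L): S = the t-1 smallest elements (ranks 0..t-2),
   L = the k-t largest elements (ranks n-(k-t) .. n-1). *)
Definition middle (k t n : nat) (sigma : {perm 'I_n}) (x : 'I_n) : bool :=
  (t.-1 <= sigma x) && (sigma x < n - (k - t)).

Definition determines_middle (k t n : nat) (F : {set {set 'I_n}}) : Prop :=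
  forall sigma tau : {perm 'I_n},
    (forall Q x, Q \in F -> scale_answer t sigma Q x = scale_answer t tau Q x) ->
    (forall x, middle k t sigma x = middle k t tau x) /\
    (forall x y, middle k t sigma x -> middle k t sigma y ->
       (sigma x < sigma y) = (tau x < tau y)).

(* Main.v *)
Require Import Defs.
From mathcomp Require Import all_boot all_order all_fingroup.
From mathcomp Require Import zify.
Set Implicit Arguments. Unset Strict Implicit. Unset Printing Implicit Defensive.

Lemma ffact_le_exp n j : n ^_ j <= n ^ j.
Proof.
elim: j => [|j IH]; first by rewrite ffactn0 expn0.
by rewrite ffactnSr expnSr leq_mul // leq_subr.
Qed.

Lemma bin_le_exp n j : 'C(n, j) <= n ^ j.
Proof.
apply: leq_trans (ffact_le_exp n j); rewrite -bin_ffact.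
by rewrite leq_pmulr // fact_gt0.
Qed.

Lemma small_sets n b : 0 < n -> #|[set R : {set 'I_n} | #|R| <= b]| <= b.+1 * n ^ b.
Proof.
move=> n0; elim: b => [|b IH].
  rewrite mul1n expn0.
  have -> : [set R : {set 'I_n} | #|R| <= 0] = [set set0].
    apply/setP => R; rewrite !inE leqn0 cards_eq0 //.
  by rewrite cards1.
have -> : [set R : {set 'I_n} | #|R| <= b.+1] =
   [set R : {set 'I_n} | #|R| <= b] :|: [set R : {set 'I_n} | #|R| == b.+1].
  by apply/setP => R; rewrite !inE leq_eqVlt ltnS orbC.
rewrite cardsU; apply: leq_trans (leq_subr _ _) _.
rewrite card_draws card_ord.
have h1 := bin_le_exp n b.+1.
have h2 : b.+1 * n ^ b <= b.+1 * n ^ b.+1 by rewrite leq_mul2l expnS leq_pmull ?orbT.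
rewrite mulSn addnC; apply: leq_add => //; exact: leq_trans IH h2.
Qed.

Lemma cardF n k s (W : {set 'I_n}) : 0 < n ->
  #|[set Q : {set 'I_n} | (#|Q| == k) && (s <= #|Q :&: W|)]|
     <= 2 ^ #|W| * ((k - s).+1 * n ^ (k - s)).
Proof.
move=> n0.
set F := [set Q : {set 'I_n} | _].
pose f := fun Q : {set 'I_n} => (Q :&: W, Q :\: W).
have finj : injective f.
  move=> Q1 Q2 [e1 e2]; by rewrite -(setID Q1 W) -(setID Q2 W) e1 e2.
rewrite -(card_imset F finj).
apply: leq_trans (leq_mul (leqnn _) (small_sets (k - s) n0)).
rewrite -card_powerset -cardsX; apply: subset_leq_card; apply/subsetP => p /imsetP [Q].
rewrite inE => /andP [/eqP HQ Hs] ->.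
rewrite !inE /= subsetIr /= cardsD HQ leq_sub2l //.
Qed.

Lemma card_lt n r : r <= n -> #|[set i : 'I_n | i < r]| = r.
Proof.
move=> H.
have -> : [set i : 'I_n | i < r] = widen_ord H @: setT.
  apply/setP => i; rewrite inE; apply/idP/imsetP.
    move=> Hi; exists (Ordinal Hi) => //; exact: val_inj.
  by move=> [j _ ->] /=.
by rewrite card_imset ?cardsT ?card_ord //; by move=> a b /(congr1 val) /= e; apply: val_inj.
Qed.

Lemma card_below n (s : {perm 'I_n}) x : #|[set z | s z < s x]| = s x.
Proof.
have -> : [set z | s z < s x] = s @^-1: [set i : 'I_n | i < s x].
  by apply/setP => z; rewrite !inE.
by rewrite card_preimset ?card_lt //; [exact: ltnW | exact: perm_inj].
Qed.

Lemma card_above n (s : {perm 'I_n}) x : #|[set z | s x < s z]| = n - (s x).+1.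
Proof.
have -> : [set z | s x < s z] = ~: (x |: [set z | s z < s x]).
  apply/setP => z; rewrite !inE; case: (ltngtP (s x) (s z)) => h /=.
  - by apply/esym/negP => /orP [/eqP e|//]; move: h; rewrite e ltnn.
  - by rewrite orbT.
  - have e : z = x by apply: (@perm_inj _ s); apply: val_inj => /=; lia.
    by rewrite e eqxx.
have := cardsC (x |: [set z | s z < s x]).
rewrite card_ord cardsU1 card_below inE ltnn /=; lia.
Qed.

Lemma ex_sub (T : finType) (U : {set T}) j : j <= #|U| ->
  exists A : {set T}, A \subset U /\ #|A| = j.
Proof.
move=> Hj; have [s [us ss sub]] := (@card_geqP T U j Hj).
exists [set x in s]; split.
  by apply/subsetP => x; rewrite inE => /sub.
by rewrite cardsE; move/card_uniqP: us => ->.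
Qed.

Lemma cardsU_disj (T : finType) (A B : {set T}) :
  (forall z, z \in A -> z \in B -> False) -> #|A :|: B| = #|A| + #|B|.
Proof.
move=> H; rewrite cardsU.
suff -> : A :&: B = set0 by rewrite cards0 subn0.
by apply/setP => z; rewrite !inE; apply/negP => /andP [a b]; exact: H a b.
Qed.

Lemma ex_subW (T : finType) (U W : {set T}) j : j <= #|U| ->
  exists A : {set T}, [/\ A \subset U, #|A| = j & #|A :&: W| = minn #|U :&: W| j].
Proof.
move=> Hj.
have [A1 [s1 c1]] := ex_sub (leq_trans (geq_minl #|U :&: W| j) (leqnn _)).
have H2 : j - minn #|U :&: W| j <= #|U :\: W|.
  have := cardsID W U; lia.
have [A2 [s2 c2]] := ex_sub H2.
have d : forall z, z \in A1 -> z \in A2 -> False.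
  move=> z /(subsetP s1); rewrite inE => /andP [_ zW] /(subsetP s2).
  by rewrite inE zW.
exists (A1 :|: A2); split.
- apply/subsetP => z; rewrite inE => /orP [/(subsetP s1)|/(subsetP s2)];
  by rewrite inE => /andP [].
- rewrite cardsU_disj // c1 c2; lia.
- have -> : (A1 :|: A2) :&: W = A1.
    apply/setP => z; rewrite !inE; case z1: (z \in A1).
      by move: (subsetP s1 z z1); rewrite inE => /andP [].
    case z2: (z \in A2) => //=.
    by move: (subsetP s2 z z2); rewrite inE => /andP [/negbTE ->].
  by rewrite c1.
Qed.

Lemma ans_mid k t n (tau : {perm 'I_n}) (Q : {set 'I_n}) x : 1 <= t -> t <= k -> #|Q| = k ->
  scale_answer t tau Q x -> middle k t tau x.
Proof.
move=> ht1 htk HQ /andP [xQ /eqP Hc].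
have h1 : #|[set y in Q | tau y < tau x]| <= tau x.
  apply: (leq_trans _ (eq_leq (card_below tau x))); apply: subset_leq_card; apply/subsetP => y.
  by rewrite !inE => /andP [].
have h2 : #|[set y in Q | tau x < tau y]| <= n - (tau x).+1.
  apply: (leq_trans _ (eq_leq (card_above tau x))); apply: subset_leq_card; apply/subsetP => y.
  by rewrite !inE => /andP [].
have h3 : #|Q| <= #|[set y in Q | tau y < tau x]| + (1 + #|[set y in Q | tau x < tau y]|).
  apply: (@leq_trans #|[set y in Q | tau y < tau x] :|: (x |: [set y in Q | tau x < tau y])|).
    apply: subset_leq_card; apply/subsetP => y yQ; rewrite !inE yQ /=.
    case: (ltngtP (tau y) (tau x)) => h //=; rewrite ?orbT //.
    have -> : y = x by apply: (@perm_inj _ tau); apply: val_inj => /=; lia.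
    by rewrite eqxx.
  rewrite cardsU; apply: leq_trans (leq_subr _ _) _; rewrite leq_add2l cardsU1.
  by rewrite leq_add2r leq_b1.
have := ltn_ord (tau x).
rewrite /middle; move=> hx; apply/andP; split; lia.
Qed.

Lemma query_ok n k t (sigma : {perm 'I_n}) x (A B W : {set 'I_n}) :
  A \subset [set z | sigma z < sigma x] -> B \subset [set z | sigma x < sigma z] ->
  #|A| = t.-1 -> #|A| + #|B| + 1 = k ->
  [/\ #|A :|: (x |: B)| = k, scale_answer t sigma (A :|: (x |: B)) x &
      #|A :&: W| + #|B :&: W| <= #|(A :|: (x |: B)) :&: W| ].
Proof.
move=> /subsetP sA /subsetP sB cA cAB.
have xB : x \notin B by apply/negP => /sB; rewrite inE ltnn.
have d : forall z, z \in A -> z \in x |: B -> False.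
  move=> z /sA; rewrite !inE => h /orP [/eqP e|/sB].
    by move: h; rewrite e ltnn.
  by rewrite inE => h'; have := ltn_trans h h'; rewrite ltnn.
split.
- by rewrite cardsU_disj // cardsU1 xB; lia.
- apply/andP; split; first by rewrite !inE eqxx orbT.
  suff -> : [set y in A :|: (x |: B) | sigma y < sigma x] = A by rewrite cA.
  apply/setP => z; rewrite !inE.
  case zA: (z \in A) => /=; first by have := sA z zA; rewrite inE.
  apply/negP => /andP [/orP [/eqP e|zB] h]; first by move: h; rewrite e ltnn.
  by have := sB z zB; rewrite inE => h'; have := ltn_trans h h'; rewrite ltnn.
- rewrite -cardsU_disj; last first.
    move=> z; rewrite !inE => /andP [zA _] /andP [zB _]; apply: (d z zA).
    by rewrite inE zB orbT.
  apply: subset_leq_card; apply/subsetP => z; rewrite !inE.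
  by case/orP => /andP [-> ->]; rewrite ?orbT.
Qed.

Lemma exists_ans k t n (W : {set 'I_n}) (sigma : {perm 'I_n}) x :
  1 <= t -> t.*2 <= k -> k.+2 <= #|W| -> middle k t sigma x ->
  exists Q : {set 'I_n}, [/\ #|Q| = k, t.-1 <= #|Q :&: W| & scale_answer t sigma Q x].
Proof.
move=> ht1 ht2 hW /andP [m1 m2].
set a := [set z | sigma z < sigma x].
set b := [set z | sigma x < sigma z].
have ca : t.-1 <= #|a| by rewrite card_below.
have cb : k - t <= #|b| by rewrite card_above; lia.
have [A [sA cA wA]] := ex_subW W ca.
have [B [sB cB wB]] := ex_subW W cb.
have cov : #|W| <= #|a :&: W| + (1 + #|b :&: W|).
  apply: (@leq_trans #|(a :&: W) :|: (x |: (b :&: W))|).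
    apply: subset_leq_card; apply/subsetP => z zW; rewrite !inE zW !andbT.
    case: (ltngtP (sigma z) (sigma x)) => h //=; rewrite ?orbT //.
    have -> : z = x by apply: (@perm_inj _ sigma); apply: val_inj => /=; lia.
    by rewrite eqxx /= ?orbT.
  rewrite cardsU; apply: leq_trans (leq_subr _ _) _; rewrite leq_add2l cardsU1.
  by rewrite leq_add2r leq_b1.
have e : #|A| + #|B| + 1 = k by rewrite cA cB; lia.
have [c1 c2 c3] := query_ok W sA sB cA e.
exists (A :|: (x |: B)); split => //.
apply: leq_trans c3; rewrite wA wB; lia.
Qed.

Lemma arith1 t k w pa pb q : 1 <= t -> t + t <= k -> w <= pa + (2 + pb) -> k.+1 < w ->
  minn pa t.-1 < t.-1 -> minn pa t.-1 + minn pb (k - t) <= q -> t.-1 < q.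
Proof. move=> *. lia. Qed.

Lemma arith2 a c d (b0 : bool) s : c <= d -> a = b0 + c -> s < a -> s <= d.
Proof. by case: b0 => /=; lia. Qed.

Lemma arith3 (b : bool) d s : 1 + d = s -> s = b + d -> b.
Proof. by case: b => //=; lia. Qed.

Lemma arith4 k t : 1 <= t -> t + t <= k -> k - t <= t.-1 -> False.
Proof. lia. Qed.

Lemma adj k t n (W : {set 'I_n}) (sigma tau : {perm 'I_n}) x y :
  1 <= t -> t.*2 <= k -> k.+2 <= #|W| ->
  (forall Q z, Q \in [set Q : {set 'I_n} | (#|Q| == k) && (t.-1 <= #|Q :&: W|)] ->
     scale_answer t sigma Q z = scale_answer t tau Q z) ->
  middle k t sigma x -> middle k t sigma y -> sigma y = (sigma x).+1 :> nat ->
  tau x < tau y.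
Proof.
move=> ht1 ht2 hW cons /andP [m1 m2] /andP [m3 m4] hxy.
have ht2' : t + t <= k by rewrite addnn.
case: (ltngtP (tau x) (tau y)) => // hyx; last first.
  have e : x = y by apply: (@perm_inj _ tau); apply: val_inj => /=; lia.
  by move: hxy; rewrite e; lia.
exfalso.
set a := [set z | sigma z < sigma x].
set b := [set z | sigma y < sigma z].
have ca : t.-1 <= #|a| by rewrite card_below.
have cb : k - t <= #|b| by rewrite card_above; lia.
have [A [sA cA wA]] := ex_subW W ca.
have [B [sB cB wB]] := ex_subW W cb.
have cov : #|W| <= #|a :&: W| + (2 + #|b :&: W|).
  apply: (@leq_trans #|(a :&: W) :|: ([set x; y] :|: (b :&: W))|).
    apply: subset_leq_card; apply/subsetP => z zW; rewrite !inE zW !andbT.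
    case: (ltngtP (sigma z) (sigma x)) => h //=.
      case: (ltngtP (sigma y) (sigma z)) => h' //=; rewrite ?orbT //.
        lia.
      have -> : z = y by apply: (@perm_inj _ sigma); apply: val_inj => /=; lia.
      by rewrite eqxx /= ?orbT.
    have -> : z = x by apply: (@perm_inj _ sigma); apply: val_inj => /=; lia.
    by rewrite eqxx /= ?orbT.
  rewrite cardsU; apply: leq_trans (leq_subr _ _) _; rewrite leq_add2l cardsU.
  apply: leq_trans (leq_subr _ _) _; rewrite leq_add2r cards2.
  by case: (x != y).
have sB' : B \subset [set z | sigma x < sigma z].
  apply/subsetP => z /(subsetP sB); rewrite !inE; lia.
have e : #|A| + #|B| + 1 = k by rewrite cA cB; lia.
have [c1 c2 c3] := query_ok W sA sB' cA e.
set Q' := A :|: (x |: B) in c1 c2 c3 *.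
have hW' : t.-1 <= #|Q' :&: W|.
  by apply: leq_trans c3; rewrite wA wB; lia.
have yQ' : y \notin Q'.
  rewrite !inE; apply/negP => /orP [/(subsetP sA)|/orP [/eqP yx| /(subsetP sB)]];
    rewrite ?inE; try lia.
  by move: hxy; rewrite yx; lia.
have tQ' : scale_answer t tau Q' x by rewrite -cons // inE c1 eqxx.
have xQ' : x \in Q' by rewrite !inE eqxx orbT.
have BQ' : {subset B <= Q'} by move=> v vB; rewrite !inE vB !orbT.
have AQ' : {subset A <= Q'} by move=> v vA; rewrite !inE vA.
clearbody Q'.
have key : t.-1 <= #|A :&: W| \/ t.-1 < #|Q' :&: W|.
  case: (leqP t.-1 #|A :&: W|) => hA; [by left|right].
  rewrite wA in hA; rewrite wA wB in c3.
  exact: (arith1 ht1 ht2' cov hW hA c3).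
clear wA wB cov c3.
have allB : B \subset [set z | tau z < tau x].
  apply/subsetP => v vB.
  have vQ' : v \in Q' by exact: BQ'.
  have vx : v != x by apply/eqP => ev; move: (subsetP sB' v vB); rewrite ev inE ltnn.
  set Qv := y |: (Q' :\ v).
  have yQv : (y \in Q' :\ v) = false by rewrite in_setD1 (negbTE yQ') andbF.
  have cQv : #|Qv| = k by rewrite cardsU1 yQv /= -c1 (cardsD1 v Q') vQ'.
  have wQv : t.-1 <= #|Qv :&: W|.
    case: key => hA.
      apply: leq_trans hA _; apply: subset_leq_card; apply/subsetP => z.
      rewrite !inE => /andP [zA ->]; rewrite (AQ' z zA) /= !andbT; apply/orP; right.
      apply/eqP => zv; move: (subsetP sA z zA) (subsetP sB' v vB).
      rewrite zv !inE => h1 h2; have := ltn_trans h2 h1.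
      by rewrite ltnn.
    have h1 : #|(Q' :&: W) :\ v| <= #|Qv :&: W|.
      apply: subset_leq_card; apply/subsetP => z; rewrite !inE.
      by case/andP => -> /andP [-> ->]; rewrite !orbT.
    have h2 := cardsD1 v (Q' :&: W).
    exact: (arith2 h1 h2 hA).
  have sQv : scale_answer t sigma Qv x.
    apply/andP; split; first by rewrite in_setU1 in_setD1 (eq_sym x v) vx xQ' orbT.
    move: c2 => /andP [_ /eqP c2]; apply/eqP; rewrite -c2.
    suff -> : [set z in Qv | sigma z < sigma x] = [set z in Q' | sigma z < sigma x] by [].
    apply/setP => z; rewrite !inE.
    case: (eqVneq z y) => [->|zy] /=.
      have hyf : (sigma y < sigma x) = false by rewrite hxy ltnNge leqnSn.
      by rewrite hyf !andbF.
    case: (eqVneq z v) => [->|zv] //=.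
    rewrite vQ' /=; move: (subsetP sB' v vB); rewrite inE => hv.
    by rewrite ltnNge (ltnW hv).
  have tQv : scale_answer t tau Qv x by rewrite -cons // inE cQv eqxx wQv.
  move: tQ' tQv => /andP [_ /eqP t1] /andP [_ /eqP t2].
  have eQ : [set z in Qv | tau z < tau x] = y |: ([set z in Q' | tau z < tau x] :\ v).
    apply/setP => z; rewrite !inE.
    case: (eqVneq z y) => [->|zy] //=; by rewrite andbA.
  move: t2; rewrite eQ cardsU1 in_setD1 inE (negbTE yQ') andbF /= => t2.
  have := cardsD1 v [set z in Q' | tau z < tau x]; rewrite t1 inE vQ' /= => t3.
  by rewrite inE; exact: (arith3 t2 t3).
have sub : B \subset [set z in Q' | tau z < tau x].
  apply/subsetP => v vB; rewrite inE (BQ' v vB) /=.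
  by have := subsetP allB v vB; rewrite inE.
move: tQ' => /andP [_ /eqP t1]; have := subset_leq_card sub; rewrite t1 cB.
exact: arith4 ht1 ht2'.
Qed.

Lemma chain k t n (W : {set 'I_n}) (sigma tau : {perm 'I_n}) :
  1 <= t -> t.*2 <= k -> k.+2 <= #|W| ->
  (forall Q z, Q \in [set Q : {set 'I_n} | (#|Q| == k) && (t.-1 <= #|Q :&: W|)] ->
     scale_answer t sigma Q z = scale_answer t tau Q z) ->
  forall d x y, middle k t sigma x -> middle k t sigma y ->
  sigma y = (sigma x + d.+1)%N :> nat -> tau x < tau y.
Proof.
move=> ht1 ht2 hW cons d; elim: d => [|d IH] x y mx my hxy.
  by apply: (adj ht1 ht2 hW cons mx my); rewrite hxy addn1.
have hz : (sigma x).+1 < n by have := ltn_ord (sigma y); lia.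
set z := (sigma^-1)%g (Ordinal hz).
have sz : sigma z = (sigma x).+1 :> nat by rewrite /z permKV.
have mz : middle k t sigma z.
  move: mx my; rewrite /middle sz => /andP [a1 a2] /andP [a3 a4]; apply/andP; split; lia.
apply: ltn_trans (adj ht1 ht2 hW cons mx mz sz) (IH z y mz my _).
by rewrite sz hxy; lia.
Qed.

Lemma det k t n (W : {set 'I_n}) :
  1 <= t -> t.*2 <= k -> k.+2 <= #|W| ->
  determines_middle k t [set Q : {set 'I_n} | (#|Q| == k) && (t.-1 <= #|Q :&: W|)].
Proof.
move=> ht1 ht2 hW sigma tau cons.
have htk : t <= k by move: ht2; rewrite -addnn; lia.
split.
  move=> x; apply/idP/idP => mx.
    case: (exists_ans ht1 ht2 hW mx) => Q0 [c1 c2 c3].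
    apply: (ans_mid ht1 htk c1); by rewrite -cons // inE c1 eqxx c2.
  case: (exists_ans ht1 ht2 hW mx) => Q0 [c1 c2 c3].
  apply: (ans_mid ht1 htk c1); by rewrite cons // inE c1 eqxx c2.
move=> x y mx my.
case: (ltngtP (sigma x) (sigma y)) => h.
- apply/esym; apply: (chain ht1 ht2 hW cons (d := sigma y - (sigma x).+1)) => //; lia.
- apply/esym/negbTE; rewrite -leqNgt; apply: ltnW.
  apply: (chain ht1 ht2 hW cons (d := sigma x - (sigma y).+1)) => //; lia.
- have -> : x = y by apply: (@perm_inj _ sigma); apply: val_inj.
  by rewrite ltnn.
Qed.

Theorem mainTheorem4 (k t : nat) (hk : 2 <= k) (ht1 : 1 <= t) (ht2 : t.*2 <= k) :
  exists C N0 : nat, forall n : nat, N0 <= n ->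
    exists F : {set {set 'I_n}},
      (forall Q, Q \in F -> #|Q| = k) /\
      #|F| <= C * n ^ (k - t + 1) /\
      determines_middle k t F.
Proof.
exists (2 ^ k.+2 * (k - t + 2)), k.+2 => n hn.
set W := [set i : 'I_n | i < k.+2].
have cW : #|W| = k.+2 by rewrite card_lt.
have htk : t <= k by move: ht2; rewrite -addnn; lia.
exists [set Q : {set 'I_n} | (#|Q| == k) && (t.-1 <= #|Q :&: W|)].
split; [|split].
- by move=> Q; rewrite inE => /andP [/eqP].
- have n0 : 0 < n by lia.
  apply: leq_trans (cardF k t.-1 W n0) _.
  have -> : k - t.-1 = k - t + 1 by lia.
  by rewrite cW mulnA (_ : (k - t + 1).+1 = k - t + 2) //; lia.
- by apply: det => //; rewrite cW.
Qed.
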